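(* Let $q$ be a prime power and let $n\le m$ and $k\le n$ be positive integers. Let $\alpha_0,\dots,\alpha_{n-1}\in\mathbb F_{q^m}$ be linearly independent over $\mathbb F_q$, and let $\mathcal G$ be the Gabidulin code $$\mathcal G=\{(f(\alpha_0),\dots,f(\alpha_{n-1})) : f(x)=\textstyle\sum_{i} f_i x^{q^i},\ f_i\in\mathbb F_{q^m},\ \deg_q f<k\},$$ which has minimum rank distance $d=n-k+1$. Let $\tau<d$. Then there exists a word $\mathbf r\in\mathbb F_{q^m}^n$ such that the maximum list size $\ell=\ell(m,n,d,\tau)=\max_{\mathbf y\in\mathbb F_{q^m}^n}|\mathcal G\cap\mathcal B_\tau(\mathbf y)|$ satisfies $$\ell\ \ge\ |\mathcal G\cap\mathcal S_\tau(\mathbf r)|\ \ge\ \frac{\binom{n}{n-\tau}_q}{(q^m)^{n-\tau-k}}\ \ge\ q^m\, q^{\tau(m+n)-\tau^2-md},$$ and in the special case $n=m$, $\ell\ge q^n q^{2n\tau-\tau^2-nd}$.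
   Context: Fixing a basis of $\mathbb F_{q^m}$ over $\mathbb F_q$, each vector $\mathbf x\in\mathbb F_{q^m}^n$ is identified with an $m\times n$ matrix over $\mathbb F_q$; $\mathrm{rk}(\mathbf x)$ denotes the rank of this matrix, and the rank distance is $d_R(\mathbf x,\mathbf y)=\mathrm{rk}(\mathbf x-\mathbf y)$. $\mathcal B_\tau(\mathbf a)=\{\mathbf x\in\mathbb F_{q^m}^n:\mathrm{rk}(\mathbf x-\mathbf a)\le\tau\}$ and $\mathcal S_\tau(\mathbf a)=\{\mathbf x:\mathrm{rk}(\mathbf x-\mathbf a)=\tau\}$. For a linearized polynomial $f(x)=\sum_i f_i x^{q^i}$, $\deg_q f$ is the largest $i$ with $f_i\neq0$. The Gaussian binomial is $\binom{n}{r}_q=\prod_{i=0}^{r-1}\frac{q^n-q^i}{q^r-q^i}$. *)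

(* Defs.v *)
From HB Require Import structures.
From mathcomp Require Import all_boot all_order all_algebra all_field.
Set Implicit Arguments. Unset Strict Implicit. Unset Printing Implicit Defensive.
Import Order.TTheory GRing.Theory Num.Theory.
Local Open Scope ring_scope.

(* F plays the role of F_q; L0 is a finite-dimensional extension of F
   (F_{q^m}, m = \dim {:L0}); finvect_type L0 is the same field equipped
   with its canonical finType structure (so that we can count). *)
Section RankMetric.
Variables (F : finFieldType) (L0 : fieldExtType F).
Local Notation L := (finvect_type L0).

Definition word_mx n (x : 'rV[L]_n) : 'M[F]_(\dim {:L}, n) :=
  \matrix_(i < \dim {:L}, j < n) coord (vbasis {:L}) i (x ord0 j).

Definition rk n (x : 'rV[L]_n) : nat := \rank (word_mx x).

Definition rball n (a : 'rV[L]_n) (tau : nat) : {set 'rV[L]_n} :=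
  [set x | rk (x - a) <= tau]%N.

Definition rsphere n (a : 'rV[L]_n) (tau : nat) : {set 'rV[L]_n} :=
  [set x | rk (x - a) == tau].

Definition gabidulin (q n k : nat) (alpha : 'I_n -> L) : {set 'rV[L]_n} :=
  [set \row_(j < n) \sum_(i < k) f i * alpha j ^+ (q ^ i) | f : {ffun 'I_k -> L}].

Definition max_list_size n (C : {set 'rV[L]_n}) (tau : nat) : nat :=
  \max_(y : 'rV[L]_n) #|C :&: rball y tau|.

End RankMetric.

Definition gauss_binom (q n r : nat) : rat :=
  \prod_(i < r) (((q ^ n)%:R - (q ^ i)%:R) / ((q ^ r)%:R - (q ^ i)%:R)).

(* Main.v *)
Require Import Defs.
From HB Require Import structures.
From mathcomp Require Import all_boot all_order all_algebra all_field.
From mathcomp Require Import zify ring.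
Set Implicit Arguments. Unset Strict Implicit. Unset Printing Implicit Defensive.
Import Order.TTheory GRing.Theory Num.Theory.
Local Open Scope ring_scope.

Section Lin.
Variables (F : finFieldType) (L0 : fieldExtType F).
Local Notation L := (finvect_type L0).
Local Notation q := #|F|.

Definition lin (f : L -> L) := forall (a : F) x y, f (a *: x + y) = a *: f x + f y.

Lemma frob_lin : lin (fun x => x ^+ q).
Proof.
have fA : zmod_morphism (fun x : L => x ^+ q).
  move=> x y.
  have [p _ pcharFp] := finPcharP F; rewrite (card_pprimeChar pcharFp).
  elim: (logn _ _) => // n IHn; rewrite expnSr !exprM {}IHn.
  by rewrite -(pchar_lalg L) in pcharFp; rewrite -pFrobenius_autE rmorphB.
have fD : forall x y : L, (x + y) ^+ q = x ^+ q + y ^+ q.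
  move=> x y; have := fA x (- y); rewrite opprK => ->.
  have := fA 0 y; rewrite sub0r => ->; rewrite expr0n /=.
  have q0 : (q == 0)%N = false by apply/negbTE; rewrite -lt0n; apply/card_gt0P; exists 0.
  by rewrite q0 /= mulr0n sub0r opprK.
move=> a x y; rewrite fD; congr (_ + _).
rewrite -(mulr_algl a x) -[RHS](mulr_algl a) exprMn; congr (_ * _).
by rewrite -in_algE -rmorphXn /= expf_card.
Qed.

Lemma q_gt1 : (1 < q)%N. Proof. exact: card_finNzRing_gt1. Qed.

Lemma lin0 f : lin f -> f 0 = 0.
Proof. move=> hf; have h0 := hf 1 0 0; rewrite !scale1r addr0 in h0.
by apply: (@addrI _ (f 0)); rewrite addr0 -h0. Qed.

Lemma linZ f a x : lin f -> f (a *: x) = a *: f x.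
Proof. by move=> hf; rewrite -[a *: x]addr0 hf lin0 // addr0. Qed.

Lemma linD f x y : lin f -> f (x + y) = f x + f y.
Proof. by move=> hf; rewrite -{1}(scale1r x) hf scale1r. Qed.

Lemma linN f x : lin f -> f (- x) = - f x.
Proof. by move=> hf; rewrite -scaleN1r linZ // scaleN1r. Qed.

Lemma lin_sum f (I : finType) (a : I -> F) (v : I -> L) : lin f ->
  f (\sum_i a i *: v i) = \sum_i a i *: f (v i).
Proof.
move=> hf; elim/big_rec2: _ => [|i y1 y2 _ <-]; first exact: lin0.
by rewrite hf.
Qed.

Lemma lin_add f g : lin f -> lin g -> lin (fun x => f x + g x).
Proof. by move=> hf hg a x y; rewrite hf hg scalerDr addrACA. Qed.

Lemma lin_opp f : lin f -> lin (fun x => - f x).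
Proof. by move=> hf a x y; rewrite hf opprD scalerN. Qed.

Lemma lin_mul c f : lin f -> lin (fun x => c * f x).
Proof. by move=> hf a x y; rewrite hf mulrDr scalerAr. Qed.

Lemma lin_bigsum (I : finType) (f : I -> L -> L) : (forall i, lin (f i)) ->
  lin (fun x => \sum_i f i x).
Proof.
move=> hf a x y; rewrite scaler_sumr -big_split /=; apply: eq_bigr => i _; exact: hf.
Qed.

Lemma frob_iter i : lin (fun x => x ^+ (q ^ i)).
Proof.
elim: i => [|i IH] a x y; first by rewrite !expn0 !expr1.
by rewrite expnSr !exprM IH frob_lin.
Qed.

Definition lp s (c : 'I_s -> L) (x : L) := \sum_(i < s) c i * x ^+ (q ^ i).

Lemma lp_lin s (c : 'I_s -> L) : lin (lp c).
Proof. by apply: lin_bigsum => i; apply: lin_mul; apply: frob_iter. Qed.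

Lemma lin_span f (X : seq L) : lin f -> {in X, forall x, f x = 0} ->
  forall w, w \in <<X>>%VS -> f w = 0.
Proof.
move=> hf h0 w /(@coord_span _ _ _ (in_tuple X)) ->.
rewrite lin_sum // big1 // => i _; rewrite h0 ?scaler0 //; exact: mem_nth.
Qed.

Lemma roots_card (p : {poly L}) (S : {pred L}) d : p != 0 ->
  (size p <= (q ^ d).+1)%N -> {in S, forall x, root p x} -> (#|S| <= q ^ d)%N.
Proof.
move=> p0 sp hS; have := max_poly_roots p0 (rs := enum S).
rewrite enum_uniq -cardE => /(_ _ isT) h.
have : (#|S| < size p)%N by apply: h; apply/allP => x; rewrite mem_enum; exact: hS.
by move=> lt; rewrite -ltnS (leq_trans lt).
Qed.

Definition lpoly s (c : 'I_s -> L) : {poly L} := \sum_(i < s) c i *: 'X^(q ^ i).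

Lemma lpolyE s (c : 'I_s -> L) x : (lpoly c).[x] = lp c x.
Proof.
rewrite /lpoly /lp horner_sum; apply: eq_bigr => i _.
by rewrite hornerZ hornerXn.
Qed.

Lemma lpoly_coef s (c : 'I_s -> L) j : (lpoly c)`_j = \sum_(i < s) c i * (j == (q ^ i)%N)%:R.
Proof.
rewrite /lpoly coef_sum; apply: eq_bigr => i _; by rewrite coefZ coefXn.
Qed.

Lemma lpoly_coefq s (c : 'I_s -> L) (j : 'I_s) : (lpoly c)`_(q ^ j)%N = c j.
Proof.
rewrite lpoly_coef (bigD1 j) //= eqxx mulr1 big1 ?addr0 // => i ij.
rewrite eqn_exp2l ?q_gt1 //; move: ij; rewrite eq_sym -val_eqE => /negPf ->; by rewrite mulr0.
Qed.

Lemma lpoly_size s (c : 'I_s -> L) d : (s <= d.+1)%N -> (size (lpoly c) <= (q ^ d).+1)%N.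
Proof.
move=> sd; apply/leq_sizeP => j hj; rewrite lpoly_coef big1 // => i _.
suff -> : (j == (q ^ i)%N) = false by rewrite mulr0.
apply/negbTE; rewrite neq_ltn; apply/orP; right.
apply: leq_trans hj; rewrite ltnS leq_exp2l ?q_gt1 //.
by rewrite -ltnS (leq_trans (ltn_ord i)).
Qed.

Lemma lp_zero s (c : 'I_s -> L) (S : {pred L}) : (q ^ s <= #|S|)%N ->
  {in S, forall x, lp c x = 0} -> forall i, c i = 0.
Proof.
move=> hS h0 i; apply/eqP; apply/negPn/negP => ci.
have p0 : lpoly c != 0.
  apply/eqP => e; have := congr1 (fun p : {poly L} => p`_(q ^ i)%N) e.
  by rewrite /= lpoly_coefq coef0; apply/eqP.
have hr : {in S, forall x, root (lpoly c) x} by move=> x xS; rewrite /root lpolyE h0.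
have le := roots_card p0 (lpoly_size c (leqSpred s)) hr.
have s0 : (0 < s)%N by apply: leq_ltn_trans (ltn_ord i).
have : (q ^ s <= q ^ s.-1)%N by apply: leq_trans hS le.
by rewrite leq_exp2l ?q_gt1 // -ltnS prednK // ltnn.
Qed.

Definition Pg s (g : 'I_s -> L) (x : L) := x ^+ (q ^ s) - lp g x.

Lemma Pg_lin s (g : 'I_s -> L) : lin (Pg g).
Proof. by apply: lin_add; [apply: frob_iter | apply: lin_opp; apply: lp_lin]. Qed.

Lemma Pg_card s (g : 'I_s -> L) (S : {pred L}) :
  {in S, forall x, Pg g x = 0} -> (#|S| <= q ^ s)%N.
Proof.
move=> h0; pose p := 'X^(q ^ s) - lpoly g.
have pc : p`_(q ^ s) = 1.
  rewrite coefB coefXn eqxx lpoly_coef big1 ?subr0 // => i _.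
  suff -> : ((q ^ s)%N == (q ^ i)%N) = false by rewrite mulr0.
  by rewrite eqn_exp2l ?q_gt1 // gtn_eqF.
have p0 : p != 0 by apply/eqP => p0; move: pc; rewrite p0 coef0 => /eqP; rewrite eq_sym oner_eq0.
apply: (roots_card p0).
  rewrite /p (leq_trans (size_add _ _)) // size_opp geq_max size_polyXn leqnn /=.
  exact: lpoly_size.
by move=> x xS; rewrite /root /p hornerD hornerN hornerXn lpolyE -/(Pg g x) h0.
Qed.

Lemma card_free (W : {vspace L}) s :
  #|[set t : s.-tuple L | free t && all (mem W) t]| = \prod_(i < s) (q ^ \dim W - q ^ i)%N.
Proof.
elim: s => [|s IH].
  rewrite big_ord0; apply/eqP; rewrite eqn_leq; apply/andP; split.
    by rewrite (leq_trans (subset_leq_card (subset_predT _))) // card_tuple.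
  by apply/card_gt0P; exists [tuple]; rewrite inE /= nil_free.
rewrite big_ord_recr /= -IH.
pose cons_t (p : L * s.-tuple L) : s.+1.-tuple L := [tuple of p.1 :: p.2].
have bij : bijective cons_t.
  exists (fun u : s.+1.-tuple L => (thead u, [tuple of behead u])).
    by case=> x t; congr (_, _); apply: val_inj.
  by move=> u; rewrite [RHS]tuple_eta.
rewrite -[LHS]sum1_card big_mkcond /=.
rewrite (reindex cons_t (onW_bij _ bij)) /=.
rewrite -(pair_big xpredT xpredT (fun x t => if cons_t (x, t) \in _ then 1 else 0)%N) /=.
rewrite exchange_big /= -[X in (_ = X * _)%N]sum1_card big_distrl /= [RHS]big_mkcond /=.
apply: eq_bigr => t _; rewrite inE.
case: (boolP (free t && all (mem W) t)) => [/andP[ft aW] | ht].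
  rewrite mul1n.
  rewrite (eq_bigr (fun x => if x \in [predD W & <<t>>%VS] then 1 else 0)%N); last first.
    move=> x _; rewrite !inE /= free_cons ft aW.
    by rewrite !andbT.
  rewrite -big_mkcond /=.
  rewrite sum1_card.
  have sub : (<<t>> <= W)%VS by apply/span_subvP => x xt; move/allP: aW => /(_ x xt).
  have dt : \dim <<t>> = s by move/eqP: ft; rewrite size_tuple.
  rewrite -(card_vspace W) -(cardID <<t>>%VS W).
  have -> : #|[predI W & <<t>>%VS]| = #|<<t>>%VS|.
    apply: eq_card => x; rewrite !inE; apply/andP/idP => [[] // | xt]; split => //.
    exact: subvP sub x xt.
  by rewrite card_vspace dt addKn.
rewrite big1 // => x _; rewrite !inE /= free_cons.
by case: (free t) (all _ t) ht => [] [] //=; rewrite ?andbF.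
Qed.


Lemma card_rowspace p r (M : 'M[F]_(p, r)) :
  #|[set u : 'rV[F]_r | (u <= M)%MS]| = (q ^ \rank M)%N.
Proof.
rewrite -[\rank M]mul1n -card_mx -(card_imset _ (row_free_inj (row_base_free M))).
apply: eq_card => u; rewrite inE; apply/idP/imsetP => [|[w _ ->]].
  by rewrite -(eq_row_base M) => /submxP[w ->]; exists w.
by rewrite -(eq_row_base M) submxMl.
Qed.

Lemma rk_ker n (alpha : 'I_n -> L) f (x : 'rV[L]_n) :
  free [seq alpha j | j : 'I_n] -> lin f -> (forall j, x ord0 j = f (alpha j)) ->
  (q ^ (n - rk x))%N = #|[set w | (w \in <<[seq alpha j | j : 'I_n]>>%VS) && (f w == 0)]|.
Proof.
move=> hfree hf hx.
pose X := [tuple alpha j | j < n].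
have eX : val X = [seq alpha j | j : 'I_n].
  by [].
have Xj : forall j : 'I_n, X`_j = alpha j.
  by move=> j; rewrite -tnth_nth tnth_mktuple.
have fX : free X by rewrite eX.
pose psi (u : 'rV[F]_n) := \sum_j u 0 j *: alpha j.
set A := word_mx x.
have key : forall u : 'rV[F]_n, (u *m A^T == 0) = (f (psi u) == 0).
  move=> u; rewrite /psi lin_sum //.
  under eq_bigr => j _ do rewrite -hx.
  set v := \sum_j _.
  have cv : forall i, (u *m A^T) 0 i = coord (vbasis fullv) i v.
    move=> i; rewrite !mxE /v linear_sum; apply: eq_bigr => j _.
    by rewrite linearZ /= !mxE.
  apply/eqP/eqP => [h | v0].
    rewrite (coord_vbasis (memvf v)) big1 // => i _.
    by rewrite -cv h mxE scale0r.
  apply/rowP => i; rewrite cv v0 mxE; exact: linear0.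
have psi_inj : injective psi.
  move=> u u' e; apply/rowP => j.
  have := congr1 (coord X j) e; rewrite /psi.
  have E : forall w : 'rV[F]_n, \sum_j w 0 j *: alpha j = \sum_(j < n) w 0 j *: X`_j.
    by move=> w; apply: eq_bigr => i _; rewrite Xj.
  by rewrite !E !coord_sum_free.
have -> : #|[set w | (w \in <<[seq alpha j | j : 'I_n]>>%VS) && (f w == 0)]|
          = #|[set u : 'rV[F]_n | (u <= kermx A^T)%MS]|.
  rewrite -(card_imset _ psi_inj); apply: eq_card => w; rewrite !inE.
  apply/andP/imsetP => [[wV /eqP fw] | [u] ].
    have wX : w \in <<X>>%VS by rewrite eX.
    have pw : psi (\row_j coord X j w) = w.
      rewrite /psi [RHS](coord_span wX); apply: eq_bigr => j _; by rewrite mxE Xj.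
    exists (\row_j coord X j w); last by rewrite pw.
    by rewrite inE sub_kermx key pw fw.
  rewrite inE sub_kermx key => fu ->; split => //.
  rewrite /psi; apply: rpred_sum => j _; apply: rpredZ; apply: memv_span.
  by apply: map_f; rewrite mem_enum.
by rewrite card_rowspace mxrank_ker mxrank_tr.
Qed.

Section Main.
Variables (n : nat) (alpha : 'I_n -> L) (s : nat).
Hypothesis hfree : free [seq alpha j | j : 'I_n].
Hypothesis hsn : (s <= n)%N.

Definition Vs := <<[seq alpha j | j : 'I_n]>>%VS.

Lemma dimV : \dim Vs = n.
Proof. by move/eqP: hfree; rewrite /Vs size_map size_enum_ord. Qed.

Definition Ts := [set t : s.-tuple L | free t && all (mem Vs) t].

Definition Phi (t : s.-tuple L) (g : {ffun 'I_s -> L}) : {ffun 'I_s -> L} :=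
  [ffun i => lp g (tnth t i)].

Definition target (t : s.-tuple L) : {ffun 'I_s -> L} := [ffun i => tnth t i ^+ (q ^ s)].

Lemma lpB (g1 g2 : {ffun 'I_s -> L}) x : lp (g1 - g2) x = lp g1 x - lp g2 x.
Proof. by rewrite /lp -sumrB; apply: eq_bigr => i _; rewrite !ffunE mulrBl. Qed.

Lemma card_span (t : s.-tuple L) : free t -> #|<<t>>%VS| = (q ^ s)%N.
Proof. by move=> ft; rewrite card_vspace; move/eqP: ft => ->; rewrite size_tuple. Qed.

Lemma lp_inj (g1 g2 : {ffun 'I_s -> L}) (S : {pred L}) : (q ^ s <= #|S|)%N ->
  {in S, forall x, lp g1 x = lp g2 x} -> g1 = g2.
Proof.
move=> hS h; apply/ffunP => i.
have h0 : {in S, forall x, lp (g1 - g2) x = 0} by move=> x xS; rewrite lpB h // subrr.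
have := lp_zero hS h0 i; rewrite !ffunE => /eqP; rewrite subr_eq0 => /eqP //.
Qed.

Lemma Phi_inj (t : s.-tuple L) : free t -> injective (Phi t).
Proof.
move=> ft g1 g2 e; apply: (@lp_inj _ _ (mem <<t>>%VS)); first by rewrite card_span.
move=> x xt; apply/eqP; rewrite -subr_eq0 -lpB; apply/eqP.
apply: (lin_span (lp_lin _)) xt => y /(nthP 0) [i]; rewrite size_tuple => ilt <-.
have := congr1 (fun h : {ffun 'I_s -> L} => h (Ordinal ilt)) e.
rewrite !ffunE (tnth_nth 0) /= lpB => ->; by rewrite subrr.
Qed.

Definition Gt (t : s.-tuple L) : {ffun 'I_s -> L} :=
  if [pick g | Phi t g == target t] is Some g then g else 0.

Lemma Gt_spec (t : s.-tuple L) : free t -> Phi t (Gt t) = target t.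
Proof.
move=> ft; rewrite /Gt; case: pickP => [g /eqP // | none].
have [h _ hK] := injF_bij (Phi_inj ft).
by have := none (h (target t)); rewrite hK eqxx.
Qed.

Lemma Gt_zero (t : s.-tuple L) : free t -> forall w, w \in <<t>>%VS -> Pg (Gt t) w = 0.
Proof.
move=> ft w wt; apply: (lin_span (Pg_lin (Gt t))) wt => y /(nthP 0) [i]; rewrite size_tuple => ilt <-.
have := congr1 (fun h : {ffun 'I_s -> L} => h (Ordinal ilt)) (Gt_spec ft).
by rewrite !ffunE (tnth_nth 0) /= /Pg => ->; rewrite subrr.
Qed.

Definition Ker (g : {ffun 'I_s -> L}) := [set w | (w \in Vs) && (Pg g w == 0)].

Lemma Ker_span (t : s.-tuple L) : t \in Ts -> Ker (Gt t) = [set w | w \in <<t>>%VS].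
Proof.
rewrite inE => /andP[ft aV].
have sub : (<<t>> <= Vs)%VS by apply/span_subvP => x xt; move/allP: aV => /(_ x xt).
apply/eqP; rewrite eq_sym eqEcard; apply/andP; split.
  apply/subsetP => w; rewrite !inE => wt; rewrite (subvP sub _ wt) /=.
  by rewrite Gt_zero.
rewrite (@eq_card _ [set w | w \in <<t>>%VS] (mem <<t>>%VS)); last by move=> w; rewrite inE.
rewrite card_span //; apply: (@Pg_card _ (Gt t)) => w; rewrite inE => /andP[_ /eqP] //.
Qed.

Lemma Ker_card (t : s.-tuple L) : t \in Ts -> #|Ker (Gt t)| = (q ^ s)%N.
Proof.
move=> tT; rewrite Ker_span //; rewrite (@eq_card _ _ (mem <<t>>%VS)); last by move=> w; rewrite inE.
by move: tT; rewrite inE => /andP[ft _]; rewrite card_span.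
Qed.

Definition Is := [set Gt t | t in Ts].

Lemma fiber_card g : g \in Is -> #|[set t in Ts | Gt t == g]| = \prod_(i < s) (q ^ s - q ^ i)%N.
Proof.
case/imsetP => t0 t0T ->.
have := t0T; rewrite inE => /andP[ft0 aV0].
have sub0 : (<<t0>> <= Vs)%VS by apply/span_subvP => x xt; move/allP: aV0 => /(_ x xt).
have d0 : \dim <<t0>> = s by move/eqP: ft0 => ->; rewrite size_tuple.
transitivity #|[set t : s.-tuple L | free t && all (mem <<t0>>%VS) t]|; last by rewrite card_free d0.
apply: eq_card => t.
rewrite !inE; apply/andP/andP => [[/andP[ft aV] /eqP e] | [ft aU]].
  split => //; apply/allP => x xt.
  have : x \in Ker (Gt t).
    rewrite Ker_span ?inE ?ft ?aV //; exact: memv_span.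
  by rewrite e Ker_span // inE.
have aV : all (mem Vs) t by apply/allP => x xt; apply: (subvP sub0); move/allP: aU; apply.
have tT : t \in Ts by rewrite inE ft aV.
have subt : (<<t>> <= <<t0>>)%VS by apply/span_subvP => x xt; move/allP: aU; apply.
split; first by rewrite ft aV.
apply/eqP; apply: (Phi_inj ft); rewrite Gt_spec //.
apply/ffunP => i; rewrite !ffunE; apply/eqP; rewrite -subr_eq0; apply/eqP.
change (Pg (Gt t0) (tnth t i) = 0).
apply: Gt_zero ft0 _ _; apply: (subvP subt); apply: memv_span; exact: mem_tnth.
Qed.

Lemma card_Is : (#|Is| * \prod_(i < s) (q ^ s - q ^ i) = \prod_(i < s) (q ^ n - q ^ i))%N.
Proof.
rewrite -dimV -card_free -[#|[set t | _]|]sum1_card (partition_big_imset Gt) /=.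
rewrite -sum1_card big_distrl /=; apply: eq_bigr => g gI.
rewrite mul1n -(fiber_card gI) -sum1_card; apply: eq_bigl => t.
by rewrite inE.
Qed.

Lemma rk_le (x : 'rV[L]_n) : (rk x <= n)%N.
Proof. exact: rank_leq_col. Qed.

Lemma rk_Pg g f (x : 'rV[L]_n) : g \in Is -> lin f -> (forall w, (f w == 0) = (Pg g w == 0)) ->
  (forall j, x ord0 j = f (alpha j)) -> rk x = (n - s)%N.
Proof.
case/imsetP => t tT -> hf hfw hx.
have := rk_ker hfree hf hx.
rewrite (eq_card (B := Ker (Gt t))); last by move=> w; rewrite !inE hfw.
rewrite Ker_card // => /(expnI q_gt1) e.
by rewrite -e subKn // rk_le.
Qed.

Lemma Pg_inj_alpha (g g' : {ffun 'I_s -> L}) :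
  (forall j, Pg g (alpha j) = Pg g' (alpha j)) -> g = g'.
Proof.
move=> h; apply: (@lp_inj _ _ (mem Vs)).
  by rewrite card_vspace dimV leq_exp2l ?q_gt1.
move=> x xV; apply/eqP; rewrite -subr_eq0 -lpB; apply/eqP.
apply: (lin_span (lp_lin (g - g'))) xV => y /mapP [j _ ->].
rewrite lpB; have := h j; rewrite /Pg => /eqP; rewrite -subr_eq0 opprB addrC addrA addrNK.
by rewrite subr_eq0 => /eqP ->; rewrite subrr.
Qed.

End Main.

Section Final.
Variables (n : nat) (alpha : 'I_n -> L) (s k : nat).
Hypothesis hfree : free [seq alpha j | j : 'I_n].
Hypothesis hsn : (s <= n)%N.
Hypothesis hks : (k <= s)%N.

Definition hi (j : 'I_(s - k)) : 'I_s := Ordinal (etrans (esym (ltn_subRL k j s)) (ltn_ord j)).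

Lemma sum_split (G : 'I_s -> L) :
  \sum_(i < s) G i = \sum_(i < k) G (widen_ord hks i) + \sum_(i < s - k) G (hi i).
Proof.
pose H (i : nat) := oapp G 0 (insub i).
have HE : forall i : 'I_s, H i = G i by move=> i; rewrite /H valK.
rewrite (eq_bigr (fun i : 'I_s => H i)); last by move=> i _; rewrite HE.
rewrite -(big_mkord xpredT H) (big_cat_nat (leq0n k) hks) /=.
congr (_ + _).
  rewrite big_mkord; apply: eq_bigr => i _; by rewrite -HE.
rewrite -{1}[k]add0n big_addn big_mkord; apply: eq_bigr => i _.
by rewrite -HE /= addnC.
Qed.

Definition key (g : {ffun 'I_s -> L}) : {ffun 'I_(s - k) -> L} := [ffun j => g (hi j)].
Definition low (g : {ffun 'I_s -> L}) : {ffun 'I_k -> L} := [ffun i => g (widen_ord hks i)].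

Lemma exists_r : exists r : 'rV[L]_n,
  (#|Is alpha s| <= #|L| ^ (s - k) * #|gabidulin q k alpha :&: rsphere r (n - s)|)%N.
Proof.
pose c (h : {ffun 'I_(s - k) -> L}) := #|[set g in Is alpha s | key g == h]|.
have [h0 _] : {h : {ffun 'I_(s - k) -> L} | True} by exists 0.
have cpos : (0 < #|{: {ffun 'I_(s - k) -> L}}|)%N by apply/card_gt0P; exists h0.
have [hm hmax] := @bigop.eq_bigmax _ c cpos.
have le1 : (#|Is alpha s| <= #|L| ^ (s - k) * c hm)%N.
  rewrite -sum1_card (partition_big key xpredT) //= -hmax.
  have E : (#|L| ^ (s - k) = #|{: {ffun 'I_(s - k) -> L}}|)%N by rewrite card_ffun card_ord.
  rewrite E -sum_nat_const.
  apply: leq_sum => h _; apply: leq_trans (bigop.leq_bigmax h).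
  by rewrite /c -sum1_card; apply: eq_leq; apply: eq_bigl => g; rewrite inE.
pose r : 'rV[L]_n := \row_j (alpha j ^+ (q ^ s) - \sum_(i < s - k) hm i * alpha j ^+ (q ^ (k + i))).
exists r; apply: leq_trans le1 _; rewrite leq_mul2l; apply/orP; right.
pose cw (g : {ffun 'I_s -> L}) : 'rV[L]_n := \row_j \sum_(i < k) low g i * alpha j ^+ (q ^ i).
have cwE : forall g, g \in [set g in Is alpha s | key g == hm] ->
    forall j, (cw g - r) ord0 j = - Pg g (alpha j).
  move=> g; rewrite inE => /andP[_ /eqP kg] j.
  rewrite !mxE /Pg /lp sum_split.
  have e1 : \sum_(i < k) low g i * alpha j ^+ (q ^ i) =
            \sum_(i < k) g (widen_ord hks i) * alpha j ^+ (q ^ widen_ord hks i).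
    by apply: eq_bigr => i _; rewrite ffunE.
  have e2 : \sum_(i < s - k) hm i * alpha j ^+ (q ^ (k + i)) =
            \sum_(i < s - k) g (hi i) * alpha j ^+ (q ^ hi i).
    by apply: eq_bigr => i _; rewrite -kg ffunE.
  by rewrite e1 e2 !opprB addrA.
set Fh := [set g in Is alpha s | key g == hm].
have inj : {in Fh &, injective cw}.
  move=> g g' gF g'F e; apply: (Pg_inj_alpha hfree hsn) => j.
  apply: oppr_inj; rewrite -cwE // -(cwE g') //; by rewrite e.
rewrite /c -/Fh -(card_in_imset inj); apply: subset_leq_card.
apply/subsetP => x /imsetP [g gF ->]; rewrite inE; apply/andP; split.
  by apply/imsetP; exists (low g).
have gI : g \in Is alpha s by move: gF; rewrite inE => /andP[].
rewrite inE; apply/eqP; apply: (rk_Pg (f := fun w => - Pg g w) hfree gI (lin_opp (Pg_lin g))).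
  by move=> w; rewrite oppr_eq0.
by move=> j; rewrite cwE.
Qed.


End Final.

End Lin.

Lemma gauss_ge (q n s : nat) : (1 < q)%N -> (s <= n)%N ->
  (q%:R : rat) ^+ ((n - s) * s) <= gauss_binom q n s.
Proof.
move=> q1 sn; rewrite /gauss_binom exprM.
have -> : ((q%:R : rat) ^+ (n - s)) ^+ s = \prod_(i < s) (q%:R : rat) ^+ (n - s)
  by rewrite prodr_const card_ord.
apply: ler_prod => i _; apply/andP; split; first by rewrite exprn_ge0 // ler0n.
have q0 : (0 < q)%N by apply: ltnW.
have lis : (q ^ i < q ^ s)%N by rewrite ltn_exp2l // ltn_ord.
have den : 0 < (q ^ s)%:R - (q ^ i)%:R :> rat by rewrite subr_gt0 ltr_nat.
rewrite ler_pdivlMr // -!natrB ?(ltnW lis) ?leq_pexp2l // ?(leq_trans (ltnW (ltn_ord i))) //.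
rewrite -natrX -natrM ler_nat mulnBr -expnD subnK //.
by apply: leq_sub2l; rewrite -expnD leq_pexp2l // leq_addl.
Qed.

Lemma gauss_eq (q n s : nat) : (1 < q)%N -> (s <= n)%N ->
  gauss_binom q n s = (\prod_(i < s) (q ^ n - q ^ i))%N%:R / (\prod_(i < s) (q ^ s - q ^ i))%N%:R.
Proof.
move=> q1 sn; have q0 : (0 < q)%N by apply: ltnW.
rewrite /gauss_binom !natr_prod -prodf_div; apply: eq_bigr => i _.
have lis : (i <= s)%N by apply: ltnW.
by rewrite !natrB // leq_pexp2l // (leq_trans lis).
Qed.

Unset Implicit Arguments.

Theorem theorem1 (F : finFieldType) (L0 : fieldExtType F) (q m n k d tau : nat)
  (hq : #|F| = q) (hm : \dim {:L0} = m)
  (hn0 : (0 < n)%N) (hnm : (n <= m)%N) (hk0 : (0 < k)%N) (hkn : (k <= n)%N)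
  (alpha : 'I_n -> finvect_type L0)
  (halpha : free [seq alpha j | j : 'I_n])
  (hd : d = (n - k + 1)%N) (htau : (tau < d)%N) :
  let G := gabidulin q k alpha in
  let ell := max_list_size G tau in
  (exists r : 'rV[finvect_type L0]_n,
    [/\ (#|G :&: rsphere r tau| <= ell)%N,
        gauss_binom q n (n - tau) / ((q ^ m) ^ (n - tau - k))%:R
          <= (#|G :&: rsphere r tau|)%:R
      & (q ^ m)%:R * (q%:R : rat) ^ ((tau * (m + n))%:Z - (tau ^ 2)%:Z - (m * d)%:Z)
          <= gauss_binom q n (n - tau) / ((q ^ m) ^ (n - tau - k))%:R]) /\
  (n = m ->
    (q ^ n)%:R * (q%:R : rat) ^ ((2 * n * tau)%:Z - (tau ^ 2)%:Z - (n * d)%:Z)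
      <= (ell%:R : rat)).
Proof.
move=> G ell.
have q1 : (1 < q)%N by rewrite -hq; exact: card_finNzRing_gt1.
have q0 : (0 < q)%N by apply: ltnW.
subst d.
have htn : (tau <= n - k)%N by move: htau; rewrite addn1 ltnS.
have hks : (k <= n - tau)%N by lia.
have hsn : (n - tau <= n)%N := leq_subr tau n.
have ntau : (n - (n - tau))%N = tau by lia.
have cardL : #|finvect_type L0| = (q ^ m)%N.
  rewrite -(card_vspacef (Vector.class (finvect_type L0))) card_vspace hq -hm. exact: erefl.
have [r hr] := exists_r (s := (n - tau)%N) (k := k) halpha hsn hks.
rewrite ntau cardL hq in hr.
have cI := card_Is (n - tau) halpha; rewrite hq in cI.
have Ps0 : (0 < \prod_(i < n - tau) (q ^ (n - tau) - q ^ i))%N.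
  by rewrite prodn_gt0 // => i; rewrite subn_gt0 ltn_exp2l.
have gE : gauss_binom q n (n - tau) = (#|Is alpha (n - tau)|)%:R.
  by rewrite gauss_eq // -cI natrM mulfK // pnatr_eq0 -lt0n.
have Q0 : (q%:R : rat) != 0 by rewrite pnatr_eq0 -lt0n.
have qm0 : (0 : rat) < ((q ^ m) ^ (n - tau - k))%:R by rewrite ltr0n !expn_gt0 q0.
have P1 : exists r : 'rV[finvect_type L0]_n,
    [/\ (#|G :&: rsphere r tau| <= ell)%N,
        gauss_binom q n (n - tau) / ((q ^ m) ^ (n - tau - k))%:R
          <= (#|G :&: rsphere r tau|)%:R
      & (q ^ m)%:R * (q%:R : rat) ^ ((tau * (m + n))%:Z - (tau ^ 2)%:Z - (m * (n - k + 1))%:Z)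
          <= gauss_binom q n (n - tau) / ((q ^ m) ^ (n - tau - k))%:R].
  exists r; split.
  - apply: leq_trans (bigop.leq_bigmax r); apply: subset_leq_card.
    apply: setIS; apply/subsetP => x; rewrite !inE => /eqP ->; exact: leqnn.
  - by rewrite gE ler_pdivrMr // -natrM ler_nat mulnC.
  - have E : ((tau * (m + n))%:Z - (tau ^ 2)%:Z - (m * (n - k + 1))%:Z =
       (tau * (n - tau))%:Z - (m * (n - tau - k) + m)%:Z)%R by nia.
    rewrite E expfzDr // -exprnN.
    have -> : (q%:R : rat) ^ ((tau * (n - tau))%:Z) = q%:R ^+ (tau * (n - tau)) by [].
    have -> : (q ^ m)%:R * ((q%:R : rat) ^+ (tau * (n - tau)) / q%:R ^+ (m * (n - tau - k) + m))
        = q%:R ^+ (tau * (n - tau)) / ((q ^ m) ^ (n - tau - k))%:R.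
      rewrite !natrX -exprM exprD; field; by rewrite !expf_neq0.
    rewrite ler_wpM2r ?invr_ge0 ?ler0n //.
    by have := gauss_ge q1 hsn; rewrite ntau mulnC.
split => //.
move=> enm; case: P1 => r0 [h1 h2 h3].
apply: le_trans (_ : (#|G :&: rsphere r0 tau|)%:R <= _); last by rewrite ler_nat.
apply: le_trans h2; apply: le_trans h3; rewrite -enm.
have -> : ((2 * n * tau)%:Z - (tau ^ 2)%:Z - (n * (n - k + 1))%:Z =
    (tau * (n + n))%:Z - (tau ^ 2)%:Z - (n * (n - k + 1))%:Z)%R by nia.
by [].
Qed.
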